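(* Let $m\ge2$, $n\ge1$, let $G_m=BS(1,m)=\langle a,t\mid tat^{-1}=a^m\rangle$ and let $A_m$ be the normal subgroup of $G_m$ generated by $a$ (so $G_m=A_m\rtimes\langle t\rangle$ with $A_m\cong\mathbb Z[1/m]$). (1) If $\rho:G_m\to T_n(\mathbb Z[1/m])$ is a special representation, then $\rho^{-1}(U_n(\mathbb Z[1/m]))=A_m$. (2) If $m$ is even, then every injective homomorphism $\rho:G_m\to T_n(\mathbb Z[1/m])$ is a special representation.
   Context: $T_n(\mathbb Z[1/m])$ is the group of invertible upper triangular $n\times n$ matrices over $\mathbb Z[1/m]$ (i.e. upper triangular with diagonal entries in $(\mathbb Z[1/m])^\times$), and $U_n(\mathbb Z[1/m])$ is its subgroup of matrices with all diagonal entries $1$. A special representation of $G_m$ is an injective homomorphism $\rho:G_m\to T_n(\mathbb Z[1/m])$ with $\rho(A_m)\subseteq U_n(\mathbb Z[1/m])$. *)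

(* Defs.v *)
From HB Require Import structures.
From mathcomp Require Import all_boot all_order all_algebra.
Set Implicit Arguments. Unset Strict Implicit. Unset Printing Implicit Defensive.
Import Order.TTheory GRing.Theory Num.Theory.
Local Open Scope ring_scope.

(* Z[1/m] as a subring of Q: rationals q with q * m^k an integer for some k. *)
Definition Zinv (m : nat) (q : rat) : Prop :=
  exists (k : nat) (z : int), q * (m%:R) ^+ k = z%:~R.

Definition Zinv_unit (m : nat) (q : rat) : Prop :=
  Zinv m q /\ q != 0 /\ Zinv m q^-1.

Definition Tmat (m n : nat) (M : 'M[rat]_n) : Prop :=
  (forall i j, Zinv m (M i j)) /\
  (forall i j : 'I_n, (j < i)%N -> M i j = 0) /\
  (forall i, Zinv_unit m (M i i)).

Definition Umat (m n : nat) (M : 'M[rat]_n) : Prop :=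
  Tmat m M /\ (forall i, M i i = 1).

(* Model of G_m = BS(1,m) = Z[1/m] x| <t>: the element (k, b) is the affine map
   x |-> m^k x + b of Q (k : int, b in Z[1/m]).  a = (0,1) : x |-> x+1,
   t = (1,0) : x |-> m x, and t a t^-1 = a^m.  A_m = normal closure of a
   = the translations {(0,b) | b in Z[1/m]}. *)
Definition BS := (int * rat)%type.
Definition BSmem (m : nat) (g : BS) : Prop := Zinv m g.2.
Definition BSmul (m : nat) (g h : BS) : BS :=
  (g.1 + h.1, (m%:R : rat) ^ g.1 * h.2 + g.2).
Definition BSa : BS := (0, 1).
Definition BSt : BS := (1, 0).
Definition inA (g : BS) : Prop := g.1 = 0.

Definition is_rep (m n : nat) (rho : BS -> 'M[rat]_n) : Prop :=
  (forall g h, BSmem m g -> BSmem m h -> rho (BSmul m g h) = rho g *m rho h) /\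
  (forall g, BSmem m g -> Tmat m (rho g)).

Definition rep_injective (m n : nat) (rho : BS -> 'M[rat]_n) : Prop :=
  forall g h, BSmem m g -> BSmem m h -> rho g = rho h -> g = h.

Definition special_rep (m n : nat) (rho : BS -> 'M[rat]_n) : Prop :=
  is_rep m rho /\ rep_injective m rho /\
  (forall g, BSmem m g -> inA g -> Umat m (rho g)).

(* Main.v *)
Set Warnings "-notation-overridden,-ambiguous-paths".
Set Warnings "-notation-overridden,-ambiguous-paths".
Require Import Defs.
From mathcomp Require Import all_boot all_order all_algebra.
Set Implicit Arguments. Unset Strict Implicit. Unset Printing Implicit Defensive.
Import Order.TTheory GRing.Theory Num.Theory.
Local Open Scope ring_scope.

Definition upt n (A : 'M[rat]_n) := forall i j : 'I_n, (j < i)%N -> A i j = 0.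

Lemma mul_diag n (A B : 'M[rat]_n) : upt A -> upt B ->
  forall i, (A *m B) i i = A i i * B i i.
Proof.
move=> hA hB i; rewrite !mxE (bigD1 i) //= big1 ?addr0 // => k hk.
case: (ltngtP k i) => h.
- by rewrite hA ?mul0r.
- by rewrite hB ?mulr0.
- by move/val_inj: h => h; rewrite h eqxx in hk.
Qed.

Lemma mul_upt n (A B : 'M[rat]_n) : upt A -> upt B -> upt (A *m B).
Proof.
move=> hA hB i j hji; rewrite !mxE big1 // => k _.
case: (ltnP k i) => h; first by rewrite hA ?mul0r.
by rewrite hB ?mulr0 //; apply: leq_trans hji h.
Qed.

Lemma mul_entry n (A B : 'M[rat]_n) (i j : 'I_n) : upt A -> upt B ->
  (forall k, A k k = 1) -> (forall k, B k k = 1) -> (i < j)%N ->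
  (forall k : 'I_n, (i < k < j)%N -> A i k = 0 \/ B k j = 0) ->
  (A *m B) i j = A i j + B i j.
Proof.
move=> hA hB hA1 hB1 hij hk; rewrite mxE (bigD1 i) //= (bigD1 j) /=; last first.
  by rewrite -val_eqE /= gtn_eqF.
rewrite big1 ?addr0; last first.
  move=> k /andP[hki hkj].
  case: (ltnP k i) => h1; first by rewrite hA ?mul0r.
  case: (ltnP j k) => h2; first by rewrite hB ?mulr0.
  have h1' : (i < k)%N by rewrite ltn_neqAle h1 andbT eq_sym; exact: hki.
  have h2' : (k < j)%N by rewrite ltn_neqAle h2 andbT; exact: hkj.
  by case: (hk k); rewrite ?h1' ?h2' // => ->; rewrite ?mul0r ?mulr0.
by rewrite hA1 hB1 mul1r mulr1 addrC.
Qed.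

Lemma odd_root (x : rat) (k : nat) : odd k -> x ^+ k = 1 -> x = 1.
Proof.
move=> hk hx.
have hn : `|x| = 1.
  apply/eqP; rewrite -(@pexpr_eq1 _ _ k) ?normr_ge0 //; last by case: k hk {hx}.
  by rewrite -normrX hx normr1.
case: (lerP 0 x) => h; first by rewrite -(ger0_norm h).
move: hn; rewrite (ltr0_norm h) => /(congr1 (fun y => - y)); rewrite opprK => hx1.
by move: hx; rewrite hx1 -signr_odd hk expr1.
Qed.

Lemma memZ m (k z : int) : BSmem m (k, z%:~R).
Proof. by exists 0%N, z; rewrite expr0 mulr1. Qed.

Lemma memN m (k : int) (j : nat) : BSmem m (k, j%:R).
Proof. exact: (memZ m k j). Qed.

Lemma mem1 m (k : int) : BSmem m (k, 1).
Proof. exact: (memZ m k 1). Qed.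
Lemma mem0 m (k : int) : BSmem m (k, 0).
Proof. exact: (memZ m k 0). Qed.
#[local] Hint Resolve memZ memN mem0 mem1 : core.

Lemma rel_pow m : forall j : nat, ((0:int), (j.+2)%:R : rat) = BSmul m (0, 1) (0, j.+1%:R).
Proof. by move=> j; rewrite /BSmul /= addr0 expr0z mul1r natr1. Qed.

Lemma part2 m n (rho : BS -> 'M[rat]_n) : (2 <= m)%N -> ~~ odd m -> is_rep m rho ->
  forall g, BSmem m g -> inA g -> Umat m (rho g).
Proof.
move=> hm hodd [hmul hT] [k b] hg /= hk; rewrite /inA /= in hk; subst k.
split; first exact: hT.
move=> i.
pose chi h := rho h i i.
have upt_of h : BSmem m h -> upt (rho h) by move=> H; exact: (hT h H).2.1.
have chiM g h : BSmem m g -> BSmem m h -> chi (BSmul m g h) = chi g * chi h.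
  by move=> Hg Hh; rewrite /chi hmul // (mul_diag (upt_of _ Hg) (upt_of _ Hh)).
have chi0 h : BSmem m h -> chi h != 0 by move=> H; exact: ((hT h H).2.2 i).2.1.
have chipow j : chi (0, j.+1%:R) = chi (0, 1) ^+ j.+1.
  elim: j => [|j IH]; first by rewrite expr1.
  by rewrite (rel_pow m) chiM // exprS -IH.
have chiE g h k : BSmem m g -> BSmem m h -> BSmul m g h = k -> chi k = chi g * chi h.
  by move=> Hg Hh <-; exact: chiM.
have chia : chi (0, 1) = 1.
  have e1 : chi (1, m%:R) = chi (1,0) * chi (0,1).
    by apply: chiE => //; rewrite /BSmul /= mulr1 !addr0 expr1z.
  have e2 : chi (1, m%:R) = chi (0,m%:R) * chi (1,0).
    by apply: (chiE (0,m%:R) (1,0)) => //; rewrite /BSmul /= mulr0 !add0r.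
  move: e1; rewrite e2.
  rewrite mulrC => e; have := mulfI (chi0 _ (mem0 m 1)) e => {e}.
  have [m' hm'] : exists m', m = m'.+1 by exists m.-1; rewrite prednK // ltnW.
  rewrite hm' chipow exprS => e.
  apply: (odd_root (k := m')); first by move: hodd; rewrite hm' /= negbK.
  apply: (mulfI (chi0 _ (mem1 m 0))); by rewrite e mulr1.
have chi00 : chi (0, 0) = 1.
  have e := chiE (0,0) (0,0) (0,0) (mem0 m 0) (mem0 m 0).
  have {}e : chi (0,0) = chi (0,0) * chi (0,0) by apply: e; rewrite /BSmul /= mulr0 !addr0.
  by apply: (mulfI (chi0 _ (mem0 m 0))); rewrite mulr1 -e.
have chiZ (z : int) : chi (0, z%:~R) = 1.
  case: z => p.
    case: p => [|p]; first exact: chi00.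
    by rewrite chipow chia expr1n.
  have e := chiE (0, (Negz p)%:~R) (0, p.+1%:R) (0,0) (memZ m 0 _) (memN m 0 _).
  rewrite chi00 chipow chia expr1n mulr1 in e; apply/esym/e.
  by rewrite /BSmul /= addr0 expr0z mul1r NegzE intrN pmulrn subrr.
case: hg => l [z hz].
have e1 : chi (Posz l, z%:~R) = chi (Posz l, 0) * chi (0, b).
  apply: (chiE (Posz l,0) (0,b)) => //; first by exists l, z.
  by rewrite /BSmul /= !addr0 -exprnP mulrC hz.
have e2 : chi (Posz l, z%:~R) = chi (0, z%:~R) * chi (Posz l, 0).
  by apply: (chiE (0, z%:~R) (Posz l, 0)) => //; rewrite /BSmul /= mulr0 !add0r.
move: e1; rewrite e2.
rewrite chiZ mul1r -{1}(mulr1 (chi (Posz l, 0))) => e; have := mulfI (chi0 _ (mem0 m l)) e.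
by [].
Qed.
#[local] Hint Resolve memZ memN mem0 mem1 : core.
Definition dg1 n (A : 'M[rat]_n) := forall i, A i i = 1.
Definition lev n (d : nat) (A : 'M[rat]_n) := forall i j : 'I_n, (i < j < i + d)%N -> A i j = 0.

Lemma key n (U V : 'M[rat]_n) (W : nat -> 'M[rat]_n) (N : nat) :
  upt U -> dg1 U -> upt V -> dg1 V -> (forall j, upt (W j) /\ dg1 (W j)) ->
  W 0%N = U -> (forall j, W j.+1 = U *m W j) -> (0 < N)%N ->
  (V *m U = W N *m V \/ V *m W N = U *m V) -> U = 1%:M.
Proof.
move=> uU dU uV dV hW hW0 hWS hN hrel.
have levW d : (1 <= d)%N -> lev d U -> forall j, lev d (W j) /\
    forall i jj : 'I_n, (nat_of_ord jj = i + d)%N -> W j i jj = (j.+1)%:R * U i jj.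
  move=> hd hl; elim=> [|j [IH1 IH2]]; first by rewrite hW0; split => // i jj _; rewrite mul1r.
  have cond (i jj : 'I_n) : (jj <= i + d)%N -> forall k : 'I_n, (i < k < jj)%N ->
      U i k = 0 \/ W j k jj = 0.
    move=> hjj k /andP[h1 h2]; left; apply: hl; rewrite h1 /=.
    exact: leq_trans h2 hjj.
  split.
    move=> i jj /andP[h1 h2].
    have e1 : U i jj = 0 by apply: hl; rewrite h1 h2.
    have e2 : W j i jj = 0 by apply: IH1; rewrite h1 h2.
    rewrite hWS mul_entry //; first by rewrite e1 e2 addr0.
    - by case: (hW j).
    - by case: (hW j).
    - by apply: cond; apply: ltnW.
  move=> i jj hjj; rewrite hWS mul_entry //; first by rewrite IH2 // -[(j.+2)%:R]nat1r mulrDl mul1r.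
  - by case: (hW j).
  - by case: (hW j).
  - by rewrite hjj -{1}(addn0 i) ltn_add2l.
  - by apply: cond; rewrite hjj.
have step d : (1 <= d)%N -> lev d U -> lev d.+1 U.
  move=> hd hl i jj /andP[h1 h2].
  have [hlt|hge] := ltnP jj (i + d); first by apply: hl; rewrite h1.
  have hjj : nat_of_ord jj = (i + d)%N.
    by apply/eqP; rewrite eqn_leq hge andbT -ltnS -addnS.
  have [lW1 lW2] := levW d hd hl N.
  have [uWN dWN] := hW N.
  have hij : (i < jj)%N by rewrite hjj -{1}(addn0 i) ltn_add2l.
  have condU (k : 'I_n) : (i < k < jj)%N -> U k jj = 0.
    move=> /andP[k1 k2]; apply: hl; rewrite k2 hjj ltn_add2r //.
  have condUl (k : 'I_n) : (i < k < jj)%N -> U i k = 0.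
    move=> /andP[k1 k2]; apply: hl; rewrite k1 -hjj //.
  have condW (k : 'I_n) : (i < k < jj)%N -> W N k jj = 0.
    move=> /andP[k1 k2]; apply: lW1; rewrite k2 hjj ltn_add2r //.
  have condWl (k : 'I_n) : (i < k < jj)%N -> W N i k = 0.
    move=> /andP[k1 k2]; apply: lW1; rewrite k1 -hjj //.
  have eq : U i jj = (N.+1)%:R * U i jj.
    case: hrel => hr.
      have := congr1 (fun M : 'M[rat]_n => M i jj) hr => /=.
      rewrite (mul_entry uV uU dV dU hij) ?(mul_entry uWN uV dWN dV hij).
      + by rewrite lW2 // addrC => /addIr.
      + by move=> k hk; left; apply: condWl.
      + by move=> k hk; right; apply: condU.
    have := congr1 (fun M : 'M[rat]_n => M i jj) hr => /=.
    rewrite (mul_entry uV uWN dV dWN hij) ?(mul_entry uU uV dU dV hij).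
    + by rewrite lW2 // addrC => /addIr ->.
    + by move=> k hk; left; apply: condUl.
    + by move=> k hk; right; apply: condW.
  have : (N.+1%:R - 1) * U i jj = 0 by rewrite mulrBl -eq mul1r subrr.
  move/eqP; rewrite mulf_eq0 => /orP[|/eqP //].
  by rewrite subr_eq0 pnatr_eq1 eqSS => /eqP hN0; rewrite hN0 in hN.
have lev1 : lev 1 U by move=> i jj /andP[h1 h2]; rewrite addn1 ltnS in h2; move: (leq_ltn_trans h2 h1); rewrite ltnn.
have levn : forall d, lev d.+1 U.
  elim=> [|d IH] //; exact: step.
apply/matrixP => i j; rewrite !mxE.
case: (ltngtP i j) => h.
- have -> : U i j = 0.
    apply: (levn n.-1); rewrite h /= prednK; first exact: ltn_addl (ltn_ord j).
    exact: leq_ltn_trans (leq0n i) (ltn_ord i).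
  have hne : i != j by apply/eqP => e; rewrite e ltnn in h.
  by rewrite (negbTE hne).
- have hne : i != j by apply/eqP => e; rewrite e ltnn in h.
  by rewrite uU // (negbTE hne).
- by move/val_inj: h => ->; rewrite dU eqxx.
Qed.

Lemma expNegz (x : rat) l : x ^ (Negz l) = (x ^+ l.+1)^-1.
Proof. by []. Qed.

Lemma part1 m n (rho : BS -> 'M[rat]_n) : (2 <= m)%N -> special_rep m rho ->
  forall g, BSmem m g -> Umat m (rho g) -> inA g.
Proof.
move=> hm [[hmul hT] [hinj hA]] [k b] hg hU; rewrite /inA /=.
have upt_of h : BSmem m h -> upt (rho h) by move=> H; exact: (hT h H).2.1.
have dg_of h : BSmem m h -> h.1 = 0 -> dg1 (rho h) by move=> H h0; exact: (hA h H h0).2.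
pose U := rho (0,1).
pose W j := rho (0, j.+1%:R).
have hWS j : W j.+1 = U *m W j by rewrite /W (rel_pow m) hmul.
have hW j : upt (W j) /\ dg1 (W j) by split; [apply: upt_of | apply: dg_of].
have hW0 : W 0%N = U by [].
have uU : upt U by apply: upt_of.
have dU : dg1 U by apply: dg_of.
have Ucontra : U = 1%:M -> False.
  move=> h1; have : W 1%N = W 0%N by rewrite hWS hW0 h1 mul1mx.
  rewrite /W => e; have := hinj _ _ (memN m 0 2) (memN m 0 1) e => /(congr1 snd) /= /eqP.
  by rewrite eqr_nat.
have hmb : BSmem m (0, -b).
  case: hg => l [z hz]; exists l, (- z); by rewrite mulNr hz intrN.
have uV : upt (rho (k,0)) by apply: upt_of.
have dV : dg1 (rho (k,0)).
  have -> : rho (k,0) = rho (0,-b) *m rho (k,b).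
    by rewrite -hmul // /BSmul /= add0r expr0z mul1r addrN.
  move=> i; rewrite (mul_diag (upt_of _ hmb) (upt_of _ hg)).
  by rewrite (dg_of _ hmb erefl i) hU.2 mulr1.
have hWN l : W (m ^ l.+1).-1 = rho (0, (m ^ l.+1)%:R).
  by rewrite /W prednK // expn_gt0 (ltnW hm).
have hN l : (0 < (m ^ l.+1).-1)%N.
  by rewrite -ltnS prednK ?expn_gt0 ?(ltnW hm) // expnS (leq_trans hm) // leq_pmulr // expn_gt0 ltnW.
case: k {hg hU} uV dV => [[|l]|l] // uV dV; exfalso; apply: Ucontra.
- apply: (key uU dU uV dV hW hW0 hWS (hN l)); left.
  rewrite hWN /U -!hmul //; congr rho.
  by rewrite /BSmul /= mulr1 mulr0 !addr0 !add0r -exprnP natrX.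
- apply: (key uU dU uV dV hW hW0 hWS (hN l)); right.
  rewrite hWN /U -!hmul //; congr rho.
  rewrite /BSmul /= mulr0 !addr0 !add0r expNegz natrX mulVf //.
  by rewrite expf_neq0 // pnatr_eq0 -lt0n ltnW.
Qed.

Theorem lemma4p5 (m n : nat) (hm : (2 <= m)%N) (hn : (1 <= n)%N) :
  (forall rho : BS -> 'M[rat]_n, special_rep m rho ->
     forall g, BSmem m g -> (Umat m (rho g) <-> inA g)) /\
  (~~ odd m -> forall rho : BS -> 'M[rat]_n,
     is_rep m rho -> rep_injective m rho -> special_rep m rho).
Proof.
split.
- move=> rho hs g hg; split; first exact: (part1 hm hs hg).
  by move=> hA; exact: hs.2.2 g hg hA.
- move=> hodd rho hrep hinj; split=> //; split=> //.
  exact: (part2 hm hodd hrep).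
Qed.
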